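(* Let $n = 2k$ with $k \geq 3$. Then no polygon in the family $\mathcal{A}_n$ of alternating polygons can be convexified by pop operations: for every $P \in \mathcal{A}_n$ and every finite sequence of (well-defined) pop operations applied successively starting from $P$, the resulting polygon is not convex.
   Context: A polygon $P = \{p_1, \ldots, p_n\}$ in the plane is a cyclic sequence of points (vertices), joined by edges $p_i p_{i+1}$, with indices taken modulo $n$ (so $p_{n+1} = p_1$, $p_0 = p_n$); it may be simple or self-intersecting. A pop operation at vertex $p_i$ replaces $p_i$ by its reflection with respect to the line through $p_{i-1}$ and $p_{i+1}$, leaving all other vertices unchanged; it is well-defined only when $p_{i-1} \neq p_{i+1}$. A polygon is convex if it is a simple closed polygon whose boundary bounds a convex region. A polygon can be convexified by pops if some finite sequence of well-defined pop operations transforms it into a convex polygon. Alternating polygons: fix coordinates in the plane and let $n = 2k$. Let $\mathbf{x} = (x_1, \ldots, x_k)$ and $\mathbf{y} = (y_1, \ldots, y_k)$ be vectors in $\mathbb{R}^k$ with $x_i > 0$, $y_i > 0$ for all $i$, and $x_i \neq x_j$, $y_i \neq y_j$ for all $i \neq j$. Let $\sigma = (\sigma_1, \ldots, \sigma_{2k}) \in \{-1, +1\}^{2k}$. The polygon $A(\mathbf{x}, \mathbf{y}, \sigma) = \{p_1, \ldots, p_{2k}\}$ is defined by $p_{2i+1} = (\sigma_{2i+1} x_{i+1}, 0)$ for $i = 0, \ldots, k-1$, and $p_{2i} = (0, \sigma_{2i} y_i)$ for $i = 1, \ldots, k$. The family $\mathcal{A}_n = \mathcal{A}_{2k}$ consists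 of all polygons $A(\mathbf{x}, \mathbf{y}, \sigma)$ for all such $\mathbf{x}, \mathbf{y}, \sigma$. *)

(* Defs.v *)
From Stdlib Require Import Reals Arith Lia.
Open Scope R_scope.

Definition point : Type := (R * R)%type.

(* A polygon with n vertices is a function P : nat -> point, read modulo n:
   vertex i is P (i mod n), so vertex n = vertex 0 (cyclic indexing). *)
Definition vtx (n : nat) (P : nat -> point) (i : nat) : point := P (i mod n).

Definition cross (u v : point) : R := fst u * snd v - snd u * fst v.
Definition dot (u v : point) : R := fst u * fst v + snd u * snd v.
Definition psub (u v : point) : point := (fst u - fst v, snd u - snd v).

Definition reflect_pt (a b p : point) : point :=
  let d := psub b a in
  let t := dot (psub p a) d / dot d d in
  (2 * (fst a + t * fst d) - fst p, 2 * (snd a + t * snd d) - snd p).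

Definition prev_v (n : nat) (P : nat -> point) (i : nat) : point :=
  vtx n P (i + n - 1).
Definition next_v (n : nat) (P : nat -> point) (i : nat) : point :=
  vtx n P (i + 1).

Definition pop (n : nat) (P : nat -> point) (i : nat) : nat -> point :=
  fun j => if Nat.eqb (j mod n) (i mod n)
           then reflect_pt (prev_v n P i) (next_v n P i) (vtx n P i)
           else P j.

Definition pop_well_defined (n : nat) (P : nat -> point) (i : nat) : Prop :=
  prev_v n P i <> next_v n P i.

Inductive pops_reach (n : nat) (P : nat -> point) : (nat -> point) -> Prop :=
| pops_refl : pops_reach n P P
| pops_step : forall Q i, pops_reach n P Q -> (i < n)%nat ->
    pop_well_defined n Q i -> pops_reach n P (pop n Q i).

Definition on_seg (a b x : point) : Prop :=
  exists t, 0 <= t <= 1 /\ x = (fst a + t * (fst b - fst a), snd a + t * (snd b - snd a)).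

Definition on_edge (n : nat) (P : nat -> point) (i : nat) (x : point) : Prop :=
  on_seg (vtx n P i) (vtx n P (i + 1)) x.

Definition simple_polygon (n : nat) (P : nat -> point) : Prop :=
  (3 <= n)%nat /\
  (forall i j, (i < n)%nat -> (j < n)%nat -> i <> j -> vtx n P i <> vtx n P j) /\
  (forall i x, (i < n)%nat -> on_edge n P i x -> on_edge n P (i + 1) x ->
      x = vtx n P (i + 1)) /\
  (forall i j x, (i < n)%nat -> (j < n)%nat -> i <> j ->
      (i + 1) mod n <> j -> (j + 1) mod n <> i ->
      on_edge n P i x -> on_edge n P j x -> False).

(* Convex polygon: a simple polygon such that, for every edge, all vertices
   lie in one closed half-plane bounded by the line supporting that edge
   (i.e. the simple polygon bounds a convex region). *)
Definition convex_polygon (n : nat) (P : nat -> point) : Prop :=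
  simple_polygon n P /\
  forall i j l, (i < n)%nat -> (j < n)%nat -> (l < n)%nat ->
    0 <= cross (psub (vtx n P (i + 1)) (vtx n P i)) (psub (vtx n P j) (vtx n P i)) *
         cross (psub (vtx n P (i + 1)) (vtx n P i)) (psub (vtx n P l) (vtx n P i)).

(* Alternating polygon A(x, y, sigma) with n = 2k vertices p_1..p_{2k}
   (p_0 = p_{2k}):  p_{2i+1} = (sigma_{2i+1} x_{i+1}, 0),
   p_{2i} = (0, sigma_{2i} y_i).  Vectors x, y are indexed 1..k, sigma 1..2k. *)
Definition alt_polygon (k : nat) (x y sigma : nat -> R) : nat -> point :=
  fun j =>
    let m := (j mod (2 * k))%nat in
    let m' := if Nat.eqb m 0 then (2 * k)%nat else m in
    if Nat.odd m' then (sigma m' * x ((m' + 1) / 2)%nat, 0)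
    else (0, sigma m' * y (m' / 2)%nat).

Definition in_alt_family (k : nat) (P : nat -> point) : Prop :=
  exists x y sigma : nat -> R,
    (forall i, (1 <= i <= k)%nat -> 0 < x i /\ 0 < y i) /\
    (forall i j, (1 <= i <= k)%nat -> (1 <= j <= k)%nat -> i <> j ->
        x i <> x j /\ y i <> y j) /\
    (forall i, (1 <= i <= 2 * k)%nat -> sigma i = 1 \/ sigma i = -1) /\
    P = alt_polygon k x y sigma.

(* Main.v *)
Require Import Defs.
From Stdlib Require Import Reals Arith Lia Lra Psatz.
Open Scope R_scope.

Definition mp (k j : nat) : nat :=
  if Nat.eqb (j mod (2*k)) 0 then (2*k)%nat else (j mod (2*k))%nat.

Lemma alt_eq k x y s j :
  alt_polygon k x y s j =
  if Nat.odd (mp k j) then (s (mp k j) * x ((mp k j + 1) / 2)%nat, 0)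
  else (0, s (mp k j) * y (mp k j / 2)%nat).
Proof. reflexivity. Qed.

Lemma odd_2a a r : Nat.odd (2*a + r) = Nat.odd r.
Proof. rewrite Nat.odd_add, Nat.odd_mul. simpl. destruct (Nat.odd r); reflexivity. Qed.

Lemma odd_mod k j : (1 <= k)%nat -> Nat.odd (j mod (2*k)) = Nat.odd j.
Proof.
  intros Hk. pose proof (Nat.div_mod_eq j (2*k)) as E.
  rewrite E at 2. rewrite <- Nat.mul_assoc. rewrite odd_2a. reflexivity.
Qed.

Lemma odd_mp k j : (1 <= k)%nat -> Nat.odd (mp k j) = Nat.odd j.
Proof.
  intros Hk. unfold mp. rewrite <- (odd_mod k j Hk).
  destruct (Nat.eqb_spec (j mod (2*k)) 0) as [H|H].
  - rewrite H. replace (2*k)%nat with (2*k+0)%nat by lia. rewrite odd_2a. reflexivity.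
  - reflexivity.
Qed.

Lemma mp_mod k j : (1 <= k)%nat -> mp k (j mod (2*k)) = mp k j.
Proof. intros Hk. unfold mp. rewrite Nat.mod_mod by lia. reflexivity. Qed.

Lemma mp_inj k i j : (1 <= k)%nat -> mp k j = mp k i -> (j mod (2*k) = i mod (2*k))%nat.
Proof.
  intros Hk. unfold mp.
  pose proof (Nat.mod_upper_bound j (2*k)) as Hj.
  pose proof (Nat.mod_upper_bound i (2*k)) as Hi.
  destruct (Nat.eqb_spec (j mod (2*k)) 0); destruct (Nat.eqb_spec (i mod (2*k)) 0); lia.
Qed.

Lemma mp_small k j : (1 <= j <= 2*k)%nat -> mp k j = j.
Proof.
  intros H. unfold mp.
  destruct (Nat.eq_dec j (2*k)) as [E|E].
  - subst. rewrite Nat.mod_same by lia. reflexivity.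
  - rewrite Nat.mod_small by lia. destruct (Nat.eqb_spec j 0); lia.
Qed.

Lemma shape_odd k x y s j : (1 <= k)%nat -> Nat.odd j = true ->
  exists a, alt_polygon k x y s j = (a, 0).
Proof.
  intros Hk H. rewrite alt_eq, odd_mp, H by exact Hk. eauto.
Qed.

Lemma shape_even k x y s j : (1 <= k)%nat -> Nat.odd j = false ->
  exists b, alt_polygon k x y s j = (0, b).
Proof.
  intros Hk H. rewrite alt_eq, odd_mp, H by exact Hk. eauto.
Qed.

Lemma refl_x Y1 Y2 a : Y1 <> Y2 -> reflect_pt (0, Y1) (0, Y2) (a, 0) = (-a, 0).
Proof.
  intros H. unfold reflect_pt, psub, dot; simpl.
  assert (Y2 - Y1 <> 0) by lra.
  f_equal; field; intro C; apply H0; nra.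
Qed.

Lemma refl_y X1 X2 b : X1 <> X2 -> reflect_pt (X1, 0) (X2, 0) (0, b) = (0, -b).
Proof.
  intros H. unfold reflect_pt, psub, dot; simpl.
  assert (X2 - X1 <> 0) by lra.
  f_equal; field; intro C; apply H0; nra.
Qed.

Lemma odd_prev k i : (1 <= k)%nat -> Nat.odd ((i + 2*k - 1) mod (2*k)) = negb (Nat.odd i).
Proof.
  intros Hk. rewrite odd_mod by exact Hk.
  replace (i + 2*k - 1)%nat with (2*(k-1) + (i+1))%nat by lia.
  rewrite odd_2a, Nat.add_1_r, Nat.odd_succ, <- Nat.negb_odd. reflexivity.
Qed.

Lemma odd_next k i : (1 <= k)%nat -> Nat.odd ((i + 1) mod (2*k)) = negb (Nat.odd i).
Proof.
  intros Hk. rewrite odd_mod by exact Hk.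
  rewrite Nat.add_1_r, Nat.odd_succ, <- Nat.negb_odd. reflexivity.
Qed.

Lemma invariant k x y sigma : (1 <= k)%nat ->
  (forall i, (1 <= i <= 2 * k)%nat -> sigma i = 1 \/ sigma i = -1) ->
  forall Q, pops_reach (2*k) (alt_polygon k x y sigma) Q ->
  exists s, (forall i, (1 <= i <= 2 * k)%nat -> s i = 1 \/ s i = -1) /\
    forall j, Q j = alt_polygon k x y s j.
Proof.
  intros Hk Hs Q HQ. induction HQ as [|Q i HQ IH Hi Hwd].
  - exists sigma. split; auto.
  - destruct IH as [s [Hs' HQe]].
    set (m0 := mp k i).
    exists (fun m => if Nat.eqb m m0 then - s m else s m).
    split.
    + intros m Hm. destruct (Nat.eqb m m0); destruct (Hs' m Hm); lra.
    + intros j. unfold pop.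
      destruct (Nat.eqb_spec (j mod (2*k)) (i mod (2*k))) as [E|E].
      * assert (Hm : mp k j = m0).
        { unfold m0. rewrite <- (mp_mod k j Hk), <- (mp_mod k i Hk), E. reflexivity. }
        unfold pop_well_defined, prev_v, next_v, vtx in *.
        rewrite !HQe in *.
        rewrite (alt_eq k x y s (i mod (2*k))), (alt_eq k x y _ j), mp_mod, Hm by exact Hk.
        rewrite Nat.eqb_refl.
        unfold m0. rewrite odd_mp by exact Hk.
        destruct (Nat.odd i) eqn:Ho.
        -- destruct (shape_even k x y s ((i + 2 * k - 1) mod (2 * k)) Hk) as [b1 Hb1].
           { rewrite odd_prev, Ho by exact Hk. reflexivity. }
           destruct (shape_even k x y s ((i + 1) mod (2 * k)) Hk) as [b2 Hb2].
           { rewrite odd_next, Ho by exact Hk. reflexivity. }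
           rewrite Hb1, Hb2 in *. rewrite refl_x.
           ++ f_equal. ring.
           ++ intro C. apply Hwd. rewrite C. reflexivity.
        -- destruct (shape_odd k x y s ((i + 2 * k - 1) mod (2 * k)) Hk) as [b1 Hb1].
           { rewrite odd_prev, Ho by exact Hk. reflexivity. }
           destruct (shape_odd k x y s ((i + 1) mod (2 * k)) Hk) as [b2 Hb2].
           { rewrite odd_next, Ho by exact Hk. reflexivity. }
           rewrite Hb1, Hb2 in *. rewrite refl_y.
           ++ f_equal. ring.
           ++ intro C. apply Hwd. rewrite C. reflexivity.
      * rewrite HQe. rewrite !alt_eq.
        destruct (Nat.eqb_spec (mp k j) m0) as [C|C].
        -- exfalso. apply E. apply mp_inj; assumption.
        -- reflexivity.
Qed.

Lemma middle (a b c : R) : a <> b -> b <> c -> a <> c ->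
  (a-b)*(c-b) < 0 \/ (b-a)*(c-a) < 0 \/ (a-c)*(b-c) < 0.
Proof.
  intros. destruct (Rlt_le_dec a b); destruct (Rlt_le_dec b c); destruct (Rlt_le_dec a c).
  all: first [ left; nra | right; left; nra | right; right; nra | lra ].
Qed.

Theorem theorem1 :
  forall (k : nat), (3 <= k)%nat ->
  forall P : nat -> point, in_alt_family k P ->
  forall Q : nat -> point, pops_reach (2 * k) P Q ->
  ~ convex_polygon (2 * k) Q.
Proof.
  intros k Hk P [x [y [sigma [Hpos [Hdist [Hsig HP]]]]]] Q HQ [_ Hconv].
  subst P.
  destruct (invariant k x y sigma ltac:(lia) Hsig Q HQ) as [s [Hs HQe]].
  assert (V : forall j, (1 <= j <= 2*k)%nat -> vtx (2*k) Q j = alt_polygon k x y s j).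
  { intros j Hj. unfold vtx. rewrite !HQe, !alt_eq, mp_mod by lia. reflexivity. }
  assert (Vj : forall j, (1 <= j <= 2*k)%nat -> vtx (2*k) Q j =
     if Nat.odd j then (s j * x ((j + 1) / 2)%nat, 0) else (0, s j * y (j / 2)%nat)).
  { intros j Hj. rewrite V, alt_eq, mp_small by lia. reflexivity. }
  assert (Ysn : forall j, (1 <= j <= k)%nat -> forall t, (1 <= t <= 2*k)%nat -> s t * y j <> 0).
  { intros j Hj t Ht. destruct (Hpos j Hj). destruct (Hs t Ht); rewrite H1; lra. }
  assert (Xd : forall a b ta tb, (1 <= a <= k)%nat -> (1 <= b <= k)%nat -> a <> b ->
     (1 <= ta <= 2*k)%nat -> (1 <= tb <= 2*k)%nat -> s ta * x a <> s tb * x b).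
  { intros a b ta tb Ha Hb Hab Hta Htb.
    destruct (Hpos a Ha), (Hpos b Hb), (Hdist a b Ha Hb Hab).
    destruct (Hs ta Hta) as [E1|E1]; destruct (Hs tb Htb) as [E2|E2]; rewrite E1, E2; lra. }
  assert (K : forall i j l, (i < 2*k)%nat -> (j < 2*k)%nat -> (l < 2*k)%nat ->
     (1 <= i)%nat -> (1 <= j)%nat -> (1 <= l)%nat ->
     0 <= cross (psub (vtx (2*k) Q (i + 1)) (vtx (2*k) Q i)) (psub (vtx (2*k) Q j) (vtx (2*k) Q i)) *
         cross (psub (vtx (2*k) Q (i + 1)) (vtx (2*k) Q i)) (psub (vtx (2*k) Q l) (vtx (2*k) Q i))).
  { intros; apply Hconv; lia. }
  assert (H1 : vtx (2*k) Q 1%nat = (s 1%nat * x 1%nat, 0)) by (rewrite Vj by lia; reflexivity).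
  assert (H2 : vtx (2*k) Q 2%nat = (0, s 2%nat * y 1%nat)) by (rewrite Vj by lia; reflexivity).
  assert (H3 : vtx (2*k) Q 3%nat = (s 3%nat * x 2%nat, 0)) by (rewrite Vj by lia; reflexivity).
  assert (H4 : vtx (2*k) Q 4%nat = (0, s 4%nat * y 2%nat)) by (rewrite Vj by lia; reflexivity).
  assert (H5 : vtx (2*k) Q 5%nat = (s 5%nat * x 3%nat, 0)) by (rewrite Vj by lia; reflexivity).
  assert (H6 : vtx (2*k) Q 6%nat = (0, s 6%nat * y 3%nat)) by (rewrite Vj by lia; reflexivity).
  assert (D12 := Xd 1%nat 2%nat 1%nat 3%nat ltac:(lia) ltac:(lia) ltac:(lia) ltac:(lia) ltac:(lia)).
  assert (D23 := Xd 2%nat 3%nat 3%nat 5%nat ltac:(lia) ltac:(lia) ltac:(lia) ltac:(lia) ltac:(lia)).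
  assert (D13 := Xd 1%nat 3%nat 1%nat 5%nat ltac:(lia) ltac:(lia) ltac:(lia) ltac:(lia) ltac:(lia)).
  assert (Y1 := Ysn 1%nat ltac:(lia) 2%nat ltac:(lia)).
  assert (Y2 := Ysn 2%nat ltac:(lia) 4%nat ltac:(lia)).
  assert (Y3 := Ysn 3%nat ltac:(lia) 6%nat ltac:(lia)).
  destruct (middle _ _ _ D12 D23 D13) as [M|[M|M]].
  - specialize (K 3%nat 1%nat 5%nat). cbv [Nat.add] in K.
    rewrite H1, H3, H4, H5 in K. unfold cross, psub in K; simpl in K.
    specialize (K ltac:(lia) ltac:(lia) ltac:(lia) ltac:(lia) ltac:(lia) ltac:(lia)).
    set (Y := s 4%nat * y 2%nat) in *.
    assert (0 < Y * Y) by (destruct (Rlt_le_dec Y 0); nra).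
    nra.
  - specialize (K 1%nat 3%nat 5%nat). cbv [Nat.add] in K.
    rewrite H1, H2, H3, H5 in K. unfold cross, psub in K; simpl in K.
    specialize (K ltac:(lia) ltac:(lia) ltac:(lia) ltac:(lia) ltac:(lia) ltac:(lia)).
    set (Y := s 2%nat * y 1%nat) in *.
    assert (0 < Y * Y) by (destruct (Rlt_le_dec Y 0); nra).
    nra.
  - specialize (K 5%nat 1%nat 3%nat). cbv [Nat.add] in K.
    rewrite H1, H3, H5, H6 in K. unfold cross, psub in K; simpl in K.
    specialize (K ltac:(lia) ltac:(lia) ltac:(lia) ltac:(lia) ltac:(lia) ltac:(lia)).
    set (Y := s 6%nat * y 3%nat) in *.
    assert (0 < Y * Y) by (destruct (Rlt_le_dec Y 0); nra).
    nra.
Qed.
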